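(* Let $f:[0,1]\to\mathbb{R}$ be a $C^2$ function such that $f'(0)\ge 0$, $\inf_{[0,1]}f''>0$, $f'''$ exists and is bounded on $(0,1)$, and $f'f'''-(f'')^2\le0$ on $(0,1)$. Let $x_0\in[0,1]$, let $0<\tilde a\le a$, and suppose $(u,v)\in\mathbb{R}^2$ with $x_0-u\in[0,1]$ solves $$a f(x_0-u)+v=\tilde a f(x_0),\qquad a f'(x_0-u)=\tilde a f'(x_0).$$ Then $a f(x-u)+v\ge \tilde a f(x)$ for every $x$ with $x\in[0,1]$ and $x-u\in[0,1]$. *)

(* Defs.v *)
From Stdlib Require Import Reals.
From Coquelicot Require Import Coquelicot.
Open Scope R_scope.

Definition I01 (x : R) : Prop := 0 <= x <= 1.
Definition I01o (x : R) : Prop := 0 < x < 1.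

(* Derivative of f at x relative to the set D (one-sided at endpoints of an
   interval): the difference quotient (f y - f x)/(y - x) tends to l as
   y -> x with y in D, y <> x. *)
Definition deriv_within (D : R -> Prop) (f : R -> R) (x l : R) : Prop :=
  filterlim (fun y => (f y - f x) / (y - x))
            (within (fun y => D y /\ y <> x) (locally x)) (locally l).

Definition cont_within (D : R -> Prop) (f : R -> R) (x : R) : Prop :=
  filterlim f (within D (locally x)) (locally (f x)).

(* Main.v *)
Require Import Defs.
From Stdlib Require Import Reals Lra.
From Coquelicot Require Import Coquelicot.
Open Scope R_scope.

Definition cw (D : R -> Prop) (h : R -> R) (x : R) := limit1_in h D (h x) x.

Definition clamp (p q y : R) := Rmax p (Rmin q y).

Lemma clamp_in p q z : p <= q -> p <= clamp p q z <= q.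
Proof. intros; unfold clamp, Rmax, Rmin; repeat destruct Rle_dec; lra. Qed.

Lemma clamp_id p q y : p <= y <= q -> clamp p q y = y.
Proof. intros; unfold clamp, Rmax, Rmin; repeat destruct Rle_dec; lra. Qed.

Lemma clamp_lip p q y z : p <= y <= q -> Rabs (clamp p q z - y) <= Rabs (z - y).
Proof. intros; unfold clamp, Rmax, Rmin; repeat destruct Rle_dec;
  unfold Rabs; repeat destruct Rcase_abs; lra. Qed.

Lemma ball_R (x e y : R) : ball x e y <-> Rabs (y - x) < e.
Proof. unfold ball; simpl; unfold AbsRing_ball, abs, minus, plus, opp; simpl. tauto. Qed.

Lemma mvt_cw (h dh : R -> R) (D : R -> Prop) p q : p < q ->
  (forall y, p <= y <= q -> D y) ->
  (forall y, p < y < q -> is_derive h y (dh y)) ->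
  (forall y, p <= y <= q -> cw D h y) ->
  exists c, p < c < q /\ h q - h p = dh c * (q - p).
Proof.
  intros Hpq HD Hd Hc.
  set (H := fun y => h (clamp p q y)).
  assert (HdH : forall y, p < y < q -> is_derive H y (dh y)).
  { intros y Hy. apply is_derive_ext_loc with h; [|now apply Hd].
    assert (He : 0 < Rmin (y - p) (q - y)) by (apply Rmin_glb_lt; lra).
    exists (mkposreal _ He). intros t Ht. apply ball_R in Ht; simpl in Ht.
    pose proof (Rmin_l (y-p) (q-y)); pose proof (Rmin_r (y-p) (q-y)).
    apply Rabs_def2 in Ht.
    unfold H. rewrite clamp_id; [reflexivity| idtac]. unfold minus, plus, opp in Ht; simpl in Ht; lra. }
  assert (HcH : forall y, p <= y <= q -> continuity_pt H y).
  { intros y Hy. unfold continuity_pt, continue_in, limit1_in, limit_in. intros eps Heps. destruct (Hc y Hy eps Heps) as [alp [Halp Hal]].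
    exists alp; split; auto. intros z [_ Hz]. unfold H. simpl in *. unfold R_dist in *.
    rewrite (clamp_id p q y Hy).
    apply Hal. split. apply HD, clamp_in; lra.
    eapply Rle_lt_trans; [apply clamp_lip; auto| auto]. }
  assert (pr1 : forall c, p < c < q -> derivable_pt H c).
  { intros c Hc'. apply ex_derive_Reals_0. exists (dh c). now apply HdH. }
  destruct (MVT H id p q pr1 (fun c _ => derivable_pt_id c) Hpq HcH
    (fun c _ => derivable_continuous_pt _ _ (derivable_pt_id c))) as [c [Pc Hc2]].
  exists c; split; auto.
  rewrite derive_pt_id in Hc2.
  rewrite (derive_pt_eq_0 H c (dh c) (pr1 c Pc)) in Hc2.
  2:{ apply is_derive_Reals, HdH; auto. }
  unfold H, id in Hc2. rewrite !clamp_id in Hc2 by lra. lra.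
Qed.

Lemma dw_eps D f x l : deriv_within D f x l -> forall eps, 0 < eps ->
  exists d, 0 < d /\ forall y, D y -> y <> x -> Rabs (y - x) < d ->
   Rabs ((f y - f x) / (y - x) - l) < eps.
Proof.
  intros H eps Heps. apply filterlim_locally with (eps := mkposreal eps Heps) in H.
  destruct H as [d Hd]. exists d; split; [apply cond_pos|].
  intros y Dy Hy Hyx. specialize (Hd y). rewrite ball_R in Hd.
  specialize (Hd Hyx (conj Dy Hy)). rewrite ball_R in Hd. exact Hd.
Qed.

Lemma dw_cont D f x l : D x -> deriv_within D f x l -> cw D f x.
Proof.
  intros Dx H. unfold cw, limit1_in, limit_in. intros eps Heps.
  destruct (dw_eps D f x l H 1 Rlt_0_1) as [d [Hd Hd2]].
  assert (Hl : 0 < Rabs l + 1) by (pose proof (Rabs_pos l); lra).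
  exists (Rmin d (eps / (Rabs l + 1))). split.
  { apply Rmin_glb_lt; auto. apply Rdiv_lt_0_compat; auto. }
  intros y [Dy Hy]. simpl in *. unfold R_dist in *.
  pose proof (Rmin_l d (eps / (Rabs l + 1))) as M1.
  pose proof (Rmin_r d (eps / (Rabs l + 1))) as M2.
  destruct (Req_dec y x) as [->|Hyx].
  { replace (f x - f x) with 0 by ring. rewrite Rabs_R0; auto. }
  specialize (Hd2 y Dy Hyx ltac:(lra)).
  set (q := (f y - f x) / (y - x)) in *.
  assert (E : f y - f x = q * (y - x)) by (unfold q; field; lra).
  rewrite E, Rabs_mult.
  assert (Rabs q <= Rabs l + 1).
  { pose proof (Rabs_triang (q - l) l). replace (q - l + l) with q in H0 by ring. lra. }
  assert (Rabs (y - x) < eps / (Rabs l + 1)) by lra.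
  apply Rle_lt_trans with ((Rabs l + 1) * Rabs (y - x)).
  { apply Rmult_le_compat_r; auto. apply Rabs_pos. }
  apply Rmult_lt_compat_l with (r := Rabs l + 1) in H1; auto.
  replace ((Rabs l + 1) * (eps / (Rabs l + 1))) with eps in H1 by (field; lra). lra.
Qed.

Lemma dw_interior f x l : deriv_within I01 f x l -> 0 < x < 1 -> is_derive f x l.
Proof.
  intros H Hx. apply is_derive_Reals. intros eps Heps.
  destruct (dw_eps _ _ _ _ H eps Heps) as [d [Hd Hd2]].
  assert (He : 0 < Rmin d (Rmin x (1 - x))) by (repeat apply Rmin_glb_lt; lra).
  exists (mkposreal _ He). intros hh Hh Hhh. simpl in Hhh.
  pose proof (Rmin_l d (Rmin x (1 - x))). pose proof (Rmin_r d (Rmin x (1 - x))).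
  pose proof (Rmin_l x (1 - x)). pose proof (Rmin_r x (1 - x)).
  assert (Habs : - Rabs hh <= hh <= Rabs hh) by (unfold Rabs; destruct Rcase_abs; lra).
  specialize (Hd2 (x + hh)). replace (x + hh - x) with hh in Hd2 by ring.
  apply Hd2; [unfold I01; lra | lra | lra].
Qed.

Lemma derive_cw D h x l : is_derive h x l -> cw D h x.
Proof.
  intros H. apply is_derive_Reals in H.
  assert (Hc : continuity_pt h x) by (apply derivable_continuous_pt; exists l; exact H).
  unfold cw, limit1_in, limit_in. intros eps Heps. destruct (Hc eps Heps) as [alp [Ha Hal]]. exists alp; split; auto.
  intros y [_ Hy]. destruct (Req_dec x y) as [<-|Hne].
  { simpl. unfold R_dist. replace (h x - h x) with 0 by ring. rewrite Rabs_R0; auto. }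
  apply Hal. split; auto. split; auto. exact I.
Qed.

Lemma cw_sub (D D' : R -> Prop) h x : (forall y, D' y -> D y) -> cw D h x -> cw D' h x.
Proof.
  intros HD H. unfold cw, limit1_in, limit_in. intros eps Heps. destruct (H eps Heps) as [alp [Ha Hal]]. exists alp; split; auto.
  intros y [Dy Hy]. apply Hal; auto.
Qed.

Lemma cw_shift D h x u : cw D h (x - u) -> cw (fun y => D (y - u)) (fun y => h (y - u)) x.
Proof.
  intros H. unfold cw, limit1_in, limit_in. intros eps Heps. destruct (H eps Heps) as [alp [Ha Hal]]. exists alp; split; auto.
  intros y [Dy Hy]. apply Hal; split; auto. simpl in *; unfold R_dist in *.
  replace (y - u - (x - u)) with (y - x) by ring. auto.
Qed.

Lemma derive_shift (h : R -> R) (y u l : R) : is_derive h (y - u) l -> is_derive (fun t : R => h (t - u)) y l.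
Proof.
  intros H. apply is_derive_Reals in H. apply is_derive_Reals.
  intros eps Heps. destruct (H eps Heps) as [d Hd]. exists d. intros hh H1 H2.
  replace (y + hh - u) with (y - u + hh) by ring. auto.
Qed.

Lemma cw_const D (c x : R) : cw D (fun _ => c) x.
Proof.
  unfold cw, limit1_in, limit_in. intros eps Heps. exists 1; split; [lra|].
  intros y _. simpl. unfold R_dist. replace (c - c) with 0 by ring. rewrite Rabs_R0; auto.
Qed.

Theorem lemma2p1 (f f1 f2 f3 : R -> R)
  (Hf1 : forall x, I01 x -> deriv_within I01 f x (f1 x))
  (Hf2 : forall x, I01 x -> deriv_within I01 f1 x (f2 x))
  (Hf2c : forall x, I01 x -> cont_within I01 f2 x)
  (H0 : 0 <= f1 0)
  (Hinf : exists m, 0 < m /\ forall x, I01 x -> m <= f2 x)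
  (Hf3 : forall x, I01o x -> is_derive f2 x (f3 x))
  (Hf3b : exists M, forall x, I01o x -> Rabs (f3 x) <= M)
  (Hineq : forall x, I01o x -> f1 x * f3 x - (f2 x) ^ 2 <= 0)
  (x0 a ta u v : R)
  (Hx0 : I01 x0) (Hat : 0 < ta) (Hata : ta <= a)
  (Hx0u : I01 (x0 - u))
  (Heq1 : a * f (x0 - u) + v = ta * f x0)
  (Heq2 : a * f1 (x0 - u) = ta * f1 x0) :
  forall x, I01 x -> I01 (x - u) -> a * f (x - u) + v >= ta * f x.
Proof.
  intros x Hx Hxu.
  destruct Hinf as [m [Hm Hm2]].
  assert (Hd1 : forall y, I01o y -> is_derive f1 y (f2 y)).
  { intros y Hy; apply dw_interior; [apply Hf2; unfold I01, I01o in *; lra | exact Hy]. }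
  assert (Hd0 : forall y, I01o y -> is_derive f y (f1 y)).
  { intros y Hy; apply dw_interior; [apply Hf1; unfold I01, I01o in *; lra | exact Hy]. }
  assert (Hcf : forall y, I01 y -> cw I01 f y).
  { intros y Hy; eapply dw_cont; eauto. }
  assert (Hcf1 : forall y, I01 y -> cw I01 f1 y).
  { intros y Hy; eapply dw_cont; eauto. }
  assert (Hf2p : forall y, I01 y -> 0 < f2 y).
  { intros y Hy; specialize (Hm2 y Hy); lra. }
  assert (Hinc : forall p q, I01 p -> I01 q -> p < q -> f1 p < f1 q).
  { intros p q Hp Hq Hpq. destruct (mvt_cw f1 f2 I01 p q Hpq) as [c [Hc Hc2]].
    - intros; unfold I01 in *; lra.
    - intros y Hy; apply Hd1; unfold I01o, I01 in *; lra.
    - intros y Hy; apply Hcf1; unfold I01 in *; lra.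
    - assert (0 < f2 c) by (apply Hf2p; unfold I01 in *; lra). nra. }
  assert (Hmono : forall p q, I01 p -> I01 q -> p <= q -> f1 p <= f1 q).
  { intros p q Hp Hq [Hpq| ->]; [left; auto | right; auto]. }
  assert (Hnn : forall y, I01 y -> 0 <= f1 y).
  { intros y Hy. apply Rle_trans with (f1 0); auto. apply Hmono; unfold I01 in *; lra. }
  assert (Hpos : forall y, 0 < y <= 1 -> 0 < f1 y).
  { intros. apply Rle_lt_trans with (f1 0); auto. apply Hinc; unfold I01; lra. }
  assert (HK : forall s t, I01o s -> I01o t -> s < t -> f1 s * f2 t <= f1 t * f2 s).
  { intros s t Hs Ht Hst.
    assert (HdK : forall y, I01o y -> is_derive (fun z => f1 z / f2 z) y
                     ((f2 y * f2 y - f1 y * f3 y) / f2 y ^ 2)).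
    { intros y Hy. assert (f2 y <> 0) by (apply Rgt_not_eq, Hf2p; unfold I01o, I01 in *; lra).
      exact (is_derive_div f1 f2 y (f2 y) (f3 y) (Hd1 y Hy) (Hf3 y Hy) H). }
    destruct (mvt_cw (fun z => f1 z / f2 z) (fun y => (f2 y * f2 y - f1 y * f3 y) / f2 y ^ 2) I01o s t Hst) as [c [Hc Hc2]].
    - intros; unfold I01o in *; lra.
    - intros y Hy; apply HdK; unfold I01o in *; lra.
    - intros y Hy; eapply derive_cw, HdK; unfold I01o in *; lra.
    - assert (Hc' : I01o c) by (unfold I01o in *; lra).
      assert (0 < f2 c) by (apply Hf2p; unfold I01o, I01 in *; lra).
      assert (0 <= (f2 c * f2 c - f1 c * f3 c) / f2 c ^ 2).
      { specialize (Hineq c Hc'). unfold Rdiv; apply Rmult_le_pos.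
        - simpl in Hineq; nra.
        - left; apply Rinv_0_lt_compat; apply pow_lt; auto. }
      assert (f1 s / f2 s <= f1 t / f2 t) by nra.
      assert (0 < f2 s) by (apply Hf2p; unfold I01o, I01 in *; lra).
      assert (0 < f2 t) by (apply Hf2p; unfold I01o, I01 in *; lra).
      assert (E1 : f1 s * f2 t = (f1 s / f2 s) * (f2 s * f2 t)) by (field; lra).
      assert (E2 : f1 t * f2 s = (f1 t / f2 t) * (f2 s * f2 t)) by (field; lra).
      rewrite E1, E2. apply Rmult_le_compat_r; nra. }
  set (E := fun y => I01 y /\ I01 (y - u)).
  set (g := fun y => a * f (y - u) + v - ta * f y).
  set (dg := fun y => a * f1 (y - u) - ta * f1 y).
  assert (Hdg : forall y, I01o y -> I01o (y - u) -> is_derive g y (dg y)).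
  { intros y H1 H2.
    assert (A := derive_shift f y u (f1 (y - u)) (Hd0 _ H2)).
    assert (B := Hd0 y H1).
    apply is_derive_scal with (k := a) in A. apply is_derive_scal with (k := ta) in B.
    pose proof (is_derive_plus _ _ y _ _ A (is_derive_const v y)) as C.
    pose proof (is_derive_minus _ _ y _ _ C B) as D.
    replace (dg y) with (minus (plus (a * f1 (y - u)) zero) (ta * f1 y)).
    2:{ unfold minus, plus, zero, opp; simpl; unfold dg; ring. }
    apply is_derive_ext with (f := fun t => minus (plus (a * f (t - u)) v) (ta * f t)).
    { intros; unfold minus, plus, opp, g; simpl; ring. }
    exact D. }
  assert (Hcg : forall y, E y -> cw E g y).
  { intros y [Hy Hyu].
    pose proof (cw_sub _ E _ y (fun z Hz => proj2 Hz) (cw_shift I01 f y u (Hcf _ Hyu))) as L1.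
    pose proof (cw_sub I01 E f y (fun z Hz => proj1 Hz) (Hcf y Hy)) as L2.
    exact (limit_minus _ _ E _ _ y (limit_plus _ _ E _ _ y
      (limit_mul (fun _ => a) _ E a _ y (cw_const E a y) L1) (cw_const E v y))
      (limit_mul (fun _ => ta) f E ta _ y (cw_const E ta y) L2)). }
  assert (Hsg : forall y, I01o y -> I01o (y - u) ->
            (x0 < y -> 0 <= dg y) /\ (y < x0 -> dg y <= 0)).
  { intros y Hy Hyu. unfold dg.
    destruct (Rlt_or_le u 0) as [Hu|Hu].
    { exfalso. assert (f1 x0 < f1 (x0 - u)) by (apply Hinc; auto; lra).
      assert (0 <= f1 x0) by auto. nra. }
    destruct (Req_dec u 0) as [Hu0|Hu0].
    { subst u. rewrite Rminus_0_r in *. split; intros.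
      - assert (0 <= f1 y) by (apply Hnn; unfold I01, I01o in *; lra). nra.
      - assert (0 < f1 x0) by (apply Hpos; unfold I01, I01o in *; lra).
        assert (a = ta) by (apply Rmult_eq_reg_r with (f1 x0); lra).
        rewrite H2; lra. }
    assert (Hp0 : 0 < f1 (x0 - u)).
    { assert (f1 (x0 - u) < f1 x0) by (apply Hinc; auto; lra).
      assert (0 <= f1 (x0 - u)) by auto. nra. }
    set (F := fun t => f1 t / f1 (t - u)).
    set (dF := fun t => (f2 t * f1 (t - u) - f1 t * f2 (t - u)) / f1 (t - u) ^ 2).
    assert (HdF : forall t, I01o t -> I01o (t - u) -> is_derive F t (dF t)).
    { intros t Ht Htu. assert (f1 (t - u) <> 0).
      { apply Rgt_not_eq, Hpos; unfold I01o in *; lra. }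
      exact (is_derive_div f1 (fun t => f1 (t - u)) t (f2 t) (f2 (t - u)) (Hd1 t Ht)
               (derive_shift f1 t u _ (Hd1 _ Htu)) H). }
    assert (HdFn : forall t, I01o t -> I01o (t - u) -> dF t <= 0).
    { intros t Ht Htu. pose proof (HK (t - u) t Htu Ht ltac:(lra)).
      assert (0 < f1 (t - u)) by (apply Hpos; unfold I01o in *; lra).
      assert (0 < / f1 (t - u) ^ 2) by (apply Rinv_0_lt_compat, pow_lt; auto).
      unfold dF, Rdiv. nra. }
    assert (HcF : forall t, E t -> 0 < f1 (t - u) -> cw E F t).
    { intros t [Ht Htu] Hp.
      pose proof (cw_sub _ E _ t (fun z Hz => proj2 Hz) (cw_shift I01 f1 t u (Hcf1 _ Htu))) as L1.
      pose proof (cw_sub I01 E f1 t (fun z Hz => proj1 Hz) (Hcf1 t Ht)) as L2.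
      exact (limit_mul _ _ E _ _ t L2 (limit_inv _ E _ t L1 (Rgt_not_eq _ _ Hp))). }
    assert (Py : 0 < f1 (y - u)) by (apply Hpos; unfold I01o in *; lra).
    set (r := f1 y / f1 (y - u)). set (s := f1 x0 / f1 (x0 - u)).
    assert (E1 : f1 y = r * f1 (y - u)) by (unfold r; field; lra).
    assert (E2 : ta * s = a).
    { unfold s. replace (ta * (f1 x0 / f1 (x0 - u))) with ((ta * f1 x0) / f1 (x0 - u)) by (field; lra).
      rewrite <- Heq2. field; lra. }
    split; intro Hlt.
    - destruct (mvt_cw F dF E x0 y Hlt) as [c [Hc Hc2]].
      + intros z Hz; unfold E, I01, I01o in *; lra.
      + intros z Hz; apply HdF; unfold I01, I01o in *; lra.
      + intros z Hz. apply HcF; [unfold E, I01, I01o in *; lra|].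
        apply Rlt_le_trans with (f1 (x0 - u)); auto. apply Hmono; unfold I01, I01o in *; lra.
      + assert (dF c <= 0) by (apply HdFn; unfold I01, I01o in *; lra).
        assert (r <= s) by (unfold F in Hc2; fold r s in Hc2; nra).
        assert (0 <= (s - r) * f1 (y - u)) by (apply Rmult_le_pos; lra).
        rewrite E1, <- E2. assert (0 <= ta * ((s - r) * f1 (y - u))) by (apply Rmult_le_pos; lra). nra.
    - destruct (mvt_cw F dF E y x0 Hlt) as [c [Hc Hc2]].
      + intros z Hz; unfold E, I01, I01o in *; lra.
      + intros z Hz; apply HdF; unfold I01, I01o in *; lra.
      + intros z Hz. apply HcF; [unfold E, I01, I01o in *; lra|].
        apply Rlt_le_trans with (f1 (y - u)); auto. apply Hmono; unfold I01, I01o in *; lra.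
      + assert (dF c <= 0) by (apply HdFn; unfold I01, I01o in *; lra).
        assert (s <= r) by (unfold F in Hc2; fold r s in Hc2; nra).
        assert (0 <= (r - s) * f1 (y - u)) by (apply Rmult_le_pos; lra).
        rewrite E1, <- E2. assert (0 <= ta * ((r - s) * f1 (y - u))) by (apply Rmult_le_pos; lra). nra. }
  assert (G0 : g x0 = 0) by (unfold g; lra).
  enough (g x >= 0) by (unfold g in H; lra).
  destruct (Rtotal_order x x0) as [Hlt|[Heq|Hgt]].
  - destruct (mvt_cw g dg E x x0 Hlt) as [c [Hc Hc2]].
    + intros z Hz; unfold E, I01 in *; lra.
    + intros z Hz; apply Hdg; unfold I01, I01o in *; lra.
    + intros z Hz; apply Hcg; unfold E, I01 in *; lra.
    + assert (dg c <= 0) by (apply Hsg; unfold I01, I01o in *; lra). nra.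
  - subst; lra.
  - destruct (mvt_cw g dg E x0 x Hgt) as [c [Hc Hc2]].
    + intros z Hz; unfold E, I01 in *; lra.
    + intros z Hz; apply Hdg; unfold I01, I01o in *; lra.
    + intros z Hz; apply Hcg; unfold E, I01 in *; lra.
    + assert (0 <= dg c) by (apply Hsg; unfold I01, I01o in *; lra). nra.
Qed.
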